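(* Let $n\ge 1$, $\rho\in(0,1)$, $\alpha\ge 0$, and let $F:\mathbb{R}^n\to\mathbb{R}^n$ be $\rho$-Lipschitz with $F(x)=Gx+\xi(x)$, where $G\in\mathbb{R}^{n\times n}$ is symmetric positive semidefinite with $G\preccurlyeq\rho I$ and $\xi:\mathbb{R}^n\to\mathbb{R}^n$ is $\alpha$-Lipschitz. Let $C\ge1$, $k\ge1$ an integer, $x_0\in\mathbb{R}^n$, $\varepsilon>0$. Let $x_{i+1}=F(x_i)$ for $i=0,\dots,k$, $R=[x_0-x_1,\dots,x_k-x_{k+1}]$, and suppose $\tilde c\in\mathbb{R}^{k+1}$ satisfies $\mathbf 1^T\tilde c=1$, $\|\tilde c\|_1\le C$ and $$\|R\tilde c\|\le \min\{\|Rc\|:\mathbf 1^Tc=1,\ \|c\|_1\le C\}+\varepsilon\|F(x_0)-x_0\|.$$ Let $x_e=\sum_{i=0}^k\tilde c_ix_i$. Then $$\|F(x_e)-x_e\|\le\Big(\max_{x\in[0,\rho]}|p_*(x)|+3C\alpha k+\varepsilon\Big)\|F(x_0)-x_0\|,$$ where $p_*$ is any minimizer of $\max_{x\in[0,\rho]}|p(x)|$ over $p\in\mathbb{R}_k[X]$ with $p(1)=1$, $\|p\|_1\le C$.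
   Context: $\|\cdot\|$ is the Euclidean norm. $\mathbb{R}_k[X]$ is the space of real polynomials of degree at most $k$; $\|p\|_1$ is the sum of the absolute values of the coefficients of $p$, and $\|c\|_1=\sum_i|c_i|$ for vectors. *)

(* Defs.v *)
From HB Require Import structures.
From mathcomp Require Import all_boot all_order all_algebra.
From mathcomp Require Import all_classical all_reals.
Set Implicit Arguments. Unset Strict Implicit. Unset Printing Implicit Defensive.
Import Order.TTheory GRing.Theory Num.Theory.
Local Open Scope ring_scope.
Local Open Scope classical_set_scope.

Definition enorm (R : realType) (n : nat) (v : 'cV[R]_n) : R :=
  Num.sqrt (\sum_(i < n) (v i 0) ^+ 2).

Definition l1norm (R : realType) (m : nat) (c : 'cV[R]_m) : R :=
  \sum_(i < m) `|c i 0|.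

Definition poly_l1 (R : realType) (p : {poly R}) : R :=
  \sum_(i < size p) `|p`_i|.

(* max_{x in [0, rho]} |p(x)|  (the sup is attained: p is continuous) *)
Definition supabs (R : realType) (rho : R) (p : {poly R}) : R :=
  sup [set `|p.[x]| | x in [set x : R | 0 <= x <= rho]].

Definition lipschitz (R : realType) (n : nat) (L : R) (f : 'cV[R]_n -> 'cV[R]_n) :=
  forall x y, enorm (f x - f y) <= L * enorm (x - y).

Definition feasible_poly (R : realType) (k : nat) (C : R) (p : {poly R}) :=
  (size p <= k.+1)%N /\ p.[1] = 1 /\ poly_l1 p <= C.

(* residual matrix applied to c: R c = sum_i c_i (x_i - x_{i+1}), x_i = F^i x0 *)
Definition resid (R : realType) (n k : nat) (F : 'cV[R]_n -> 'cV[R]_n)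
  (x0 : 'cV[R]_n) (c : 'cV[R]_k.+1) : 'cV[R]_n :=
  \sum_(i < k.+1) c i 0 *: (iter i F x0 - iter i.+1 F x0).

(* Main.v *)
Require Import Defs.
From HB Require Import structures.
From mathcomp Require Import all_boot all_order all_algebra.
From mathcomp Require Import all_classical all_reals.
From mathcomp Require Import complex.
From mathcomp Require Import ring lra.
Set Implicit Arguments. Unset Strict Implicit. Unset Printing Implicit Defensive.
Import Order.TTheory GRing.Theory Num.Theory Num.Def.
Local Open Scope ring_scope.

Section Spec.
Variable R : realType.
Local Notation C := (R[i]).
Local Notation phi := (real_complex R).
Local Notation ct A := (map_mx conjC (A^T)).

Lemma phi_real (x : R) : phi x \is Num.real.
Proof. by apply/complex_realP; exists x. Qed.

Lemma conj_phi (x : R) : conjC (phi x) = phi x.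
Proof. exact/conj_Creal/phi_real. Qed.

Lemma quad_decomp m (S : 'M[R]_m) (u : 'rV[C]_m) : S^T = S ->
  (u *m map_mx phi S *m ct u) 0 0 =
  phi ((map_mx (@complex.Re R) u *m S *m (map_mx (@complex.Re R) u)^T) 0 0
     + (map_mx (@complex.Im R) u *m S *m (map_mx (@complex.Im R) u)^T) 0 0).
Proof.
move=> SS.
set a := map_mx _ u; set b := map_mx _ u.
have hu : u = map_mx phi a + 'i *: map_mx phi b.
  by apply/matrixP => i j; rewrite !mxE; exact: complexE.
have hut : ct u = map_mx phi a^T - 'i *: map_mx phi b^T.
  apply/matrixP => i j; rewrite hu !mxE rmorphD rmorphM /= conjCi !conj_phi.
  by rewrite mulNr.
have hab : b *m S *m a^T = a *m S *m b^T.
  have -> : b *m S *m a^T = (a *m S *m b^T)^T by rewrite !trmx_mul trmxK SS mulmxA.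
  by apply/matrixP => i j; rewrite !ord1 mxE.
rewrite hut {1}hu !(mulmxDl, mulmxBr, mulmxDr).
rewrite -!scalemxAl -!scalemxAr -!map_mxM hab !mxE rmorphD.
have hi : 'i * 'i = -1 :> C by rewrite -expr2 sqrCi.
by rewrite mulrA hi mulN1r opprD opprK addrA addrK.
Qed.


Lemma norm_phi (x : R) : `|phi x| = phi `|x|.
Proof. by rewrite normc_def /= expr0n addr0 sqrtr_sqr. Qed.

Lemma phi_le (x y : R) : (phi x <= phi y) = (x <= y).
Proof. exact: lecR. Qed.

Definition Qf n (y : 'cV[C]_n) := (ct y *m y) 0 0.

Lemma QfE n (y : 'cV[C]_n) : Qf y = \sum_i `|y i 0| ^+ 2.
Proof. by rewrite /Qf mxE; apply: eq_bigr => i _; rewrite !mxE normCKC. Qed.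

Lemma Qf_phi n (y : 'cV[R]_n) : Qf (map_mx phi y) = phi (\sum_i (y i 0) ^+ 2).
Proof.
rewrite /Qf mxE rmorph_sum; apply: eq_bigr => i _.
by rewrite !mxE conj_phi expr2 rmorphM.
Qed.

Lemma Qf_unitary n (P : 'M[C]_n) (y : 'cV[C]_n) : P \is unitarymx -> Qf (ct P *m y) = Qf y.
Proof.
move=> /unitarymxP PP.
by rewrite /Qf trmx_mul map_mxM trmxCK mulmxA -(mulmxA _ P) PP mulmx1.
Qed.

Lemma diag_row n (P A : 'M[C]_n) (i : 'I_n) :
  (P *m A *m ct P) i i = (row i P *m A *m ct (row i P)) 0 0.
Proof.
rewrite -row_mul !mxE; apply: eq_bigr => j _; rewrite !mxE.
by [].
Qed.


Lemma spec_sq m (G : 'M[R]_m.+1) (rho M : R) (p : {poly R}) (v : 'cV[R]_m.+1) :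
  G^T = G ->
  (forall v : 'cV[R]_m.+1, 0 <= (v^T *m G *m v) 0 0) ->
  (forall v : 'cV[R]_m.+1, (v^T *m G *m v) 0 0 <= rho * (v^T *m v) 0 0) ->
  (forall x, 0 <= x <= rho -> `|p.[x]| <= M) ->
  \sum_i ((horner_mx G p *m v) i 0) ^+ 2 <= M ^+ 2 * \sum_i (v i 0) ^+ 2.
Proof.
move=> GT Gpos Gle pM.
set Gc := map_mx phi G.
have Gn : Gc \is normalmx.
  apply: symmetric_normalmx.
    by apply/is_hermitianmxP; rewrite expr0 scale1r map_mx_id // /Gc map_trmx GT.
  apply/(@mxOverP _ _ _ Num.real) => i j; rewrite mxE; exact: phi_real.
have /orthomx_spectralP hG := Gn.
set P := spectralmx Gc in hG; set d := spectral_diag Gc in hG.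
have Pu : P \is unitarymx := spectral_unitarymx Gc.
have PP : P *m ct P = 1%:M := unitarymxP Pu.
have Pinv : invmx P = ct P := invmx_unitary Pu.
have hD : diag_mx d = P *m Gc *m ct P.
  by rewrite {1}hG Pinv !mulmxA PP mul1mx -mulmxA PP mulmx1.
have hd : forall i, exists2 r, d 0 i = phi r & 0 <= r <= rho.
  move=> i; set u := row i P.
  have e1 : d 0 i = (u *m Gc *m ct u) 0 0.
    have -> : d 0 i = diag_mx d i i by rewrite mxE eqxx mulr1n.
    by rewrite hD diag_row.
  have e2 : (u *m map_mx phi 1%:M *m ct u) 0 0 = 1.
    have := diag_row P 1%:M i; rewrite !mulmx1 PP mxE eqxx mulr1n => ->.
    by rewrite map_mx1 mulmx1.
  rewrite quad_decomp // in e1; rewrite quad_decomp ?trmx1 // !mulmx1 in e2.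
  set a := map_mx _ u in e1 e2; set b := map_mx _ u in e1 e2.
  exists ((a *m G *m a^T) 0 0 + (b *m G *m b^T) 0 0) => //.
  have ha := Gpos a^T; have hb := Gpos b^T.
  have ha' := Gle a^T; have hb' := Gle b^T.
  rewrite !trmxK in ha ha' hb hb'.
  have e3 : (a *m a^T) 0 0 + (b *m b^T) 0 0 = 1.
    by apply: complexI; rewrite e2 rmorph1.
  apply/andP; split; first exact: addr_ge0.
  by rewrite -[rho]mulr1 -e3 mulrDr lerD.
set vc := map_mx phi v; set q := map_poly phi p.
have hz : map_mx phi (horner_mx G p *m v) =
    ct P *m (diag_mx (map_mx (horner q) d) *m (P *m vc)).
  rewrite map_mxM map_horner_mx -/Gc {1}hG horner_mx_uconjC ?spectral_unit //.
  by rewrite horner_mx_diag Pinv !mulmxA.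
have hq : forall i, `|(map_mx (horner q) d) 0 i| <= phi M.
  move=> i; rewrite mxE; case: (hd i) => r -> hr.
  by rewrite horner_map norm_phi phi_le; exact: pM.
have M0 : 0 <= phi M := le_trans (normr_ge0 _) (hq ord0).
suff: Qf (map_mx phi (horner_mx G p *m v)) <= phi M ^+ 2 * Qf vc.
  by rewrite !Qf_phi -rmorphXn -rmorphM phi_le.
rewrite hz Qf_unitary //.
apply: (@le_trans _ _ (phi M ^+ 2 * Qf (P *m vc))).
  rewrite !QfE mulr_sumr; apply: ler_sum => i _.
  rewrite mul_diag_mx mxE normrM exprMn; apply: ler_wpM2r; first exact: exprn_ge0.
  by rewrite !expr2; apply: ler_pM.
by rewrite -[P in P *m vc]trmxCK Qf_unitary ?trmxC_unitary.
Qed.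

End Spec.

Section Enorm.
Variable R : realType.
Variable n : nat.
Implicit Types u v : 'cV[R]_n.

Lemma sumsq_ge0 v : 0 <= \sum_i (v i 0) ^+ 2.
Proof. by apply: sumr_ge0 => i _; exact: sqr_ge0. Qed.

Lemma enorm_ge0 v : 0 <= enorm v.
Proof. exact: sqrtr_ge0. Qed.

Lemma enorm_sq v : enorm v ^+ 2 = \sum_i (v i 0) ^+ 2.
Proof. by rewrite /enorm sqr_sqrtr // sumsq_ge0. Qed.

Lemma enormN v : enorm (- v) = enorm v.
Proof. by rewrite /enorm; congr Num.sqrt; apply: eq_bigr => i _; rewrite mxE sqrrN. Qed.

Lemma enormBC u v : enorm (u - v) = enorm (v - u).
Proof. by rewrite -enormN opprB. Qed.

Lemma enormZ (a : R) v : enorm (a *: v) = `|a| * enorm v.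
Proof.
rewrite /enorm -sqrtr_sqr -sqrtrM ?sqr_ge0 // mulr_sumr; congr Num.sqrt.
by apply: eq_bigr => i _; rewrite mxE exprMn.
Qed.

Lemma enorm0 : enorm (0 : 'cV[R]_n) = 0.
Proof. by rewrite /enorm big1 ?sqrtr0 // => i _; rewrite mxE expr0n. Qed.

Lemma sum_prod (f g : 'I_n -> R) :
  (\sum_i f i) * (\sum_j g j) = \sum_i \sum_j f i * g j.
Proof. by rewrite mulr_suml; apply: eq_bigr => i _; rewrite mulr_sumr. Qed.

Lemma cauchy_schwarz u v : \sum_i u i 0 * v i 0 <= enorm u * enorm v.
Proof.
set A := \sum_i (u i 0) ^+ 2; set B := \sum_i (v i 0) ^+ 2.
set s := \sum_i u i 0 * v i 0.
have key : 0 <= A * B + B * A - 2 * (s * s).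
  have -> : A * B + B * A - 2 * (s * s) = \sum_i \sum_j
     ((u i 0) ^+ 2 * (v j 0) ^+ 2 + (v i 0) ^+ 2 * (u j 0) ^+ 2
       - 2 * ((u i 0 * v i 0) * (u j 0 * v j 0))).
    rewrite !sum_prod mulr_sumr -big_split -sumrB /=; apply: eq_bigr => i _.
    by rewrite mulr_sumr -big_split -sumrB.
  apply: sumr_ge0 => i _; apply: sumr_ge0 => j _.
  have -> : (u i 0) ^+ 2 * (v j 0) ^+ 2 + (v i 0) ^+ 2 * (u j 0) ^+ 2
       - 2 * ((u i 0 * v i 0) * (u j 0 * v j 0)) = (u i 0 * v j 0 - u j 0 * v i 0) ^+ 2
    by ring.
  exact: sqr_ge0.
have ss : s ^+ 2 <= A * B by rewrite expr2; lra.
have [s0|s0] := lerP s 0.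
  exact: le_trans s0 (mulr_ge0 (enorm_ge0 _) (enorm_ge0 _)).
rewrite /enorm -sqrtrM ?sumsq_ge0 // -(ger0_norm (ltW s0)) -sqrtr_sqr.
exact: ler_wsqrtr.
Qed.

Lemma enormD u v : enorm (u + v) <= enorm u + enorm v.
Proof.
rewrite -(ger0_norm (addr_ge0 (enorm_ge0 u) (enorm_ge0 v))) -sqrtr_sqr /enorm.
apply: ler_wsqrtr.
have -> : \sum_i ((u + v) i 0) ^+ 2 =
    \sum_i (u i 0) ^+ 2 + 2 * (\sum_i u i 0 * v i 0) + \sum_i (v i 0) ^+ 2.
  rewrite mulr_sumr -!big_split /=; apply: eq_bigr => i _; rewrite mxE; ring.
have := cauchy_schwarz u v; rewrite /enorm.
rewrite sqrrD !sqr_sqrtr ?sumsq_ge0 //.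
set a := Num.sqrt _; set b := Num.sqrt _; move=> h.
rewrite -mulr_natl; lra.
Qed.

Lemma enorm_sum (I : Type) (r : seq I) (P : pred I) (f : I -> 'cV[R]_n) :
  enorm (\sum_(i <- r | P i) f i) <= \sum_(i <- r | P i) enorm (f i).
Proof.
apply: (big_ind2 (fun x y => enorm x <= y)); first by rewrite enorm0.
  by move=> x1 x2 y1 y2 h1 h2; apply: le_trans (enormD _ _) (lerD h1 h2).
by [].
Qed.

End Enorm.

Section PolyHelpers.
Variable R : realType.

Lemma horner_enorm m (G : 'M[R]_m.+1) (rho M : R) (p : {poly R}) (v : 'cV[R]_m.+1) :
  G^T = G ->
  (forall v : 'cV[R]_m.+1, 0 <= (v^T *m G *m v) 0 0) ->
  (forall v : 'cV[R]_m.+1, (v^T *m G *m v) 0 0 <= rho * (v^T *m v) 0 0) ->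
  0 <= M ->
  (forall x, 0 <= x <= rho -> `|p.[x]| <= M) ->
  enorm (horner_mx G p *m v) <= M * enorm v.
Proof.
move=> GT Gp Gl M0 pM.
rewrite /enorm -(ger0_norm M0) -sqrtr_sqr -sqrtrM ?sqr_ge0 //.
by apply: ler_wsqrtr; exact: spec_sq.
Qed.

Lemma horner_l1 (p : {poly R}) (x : R) : 0 <= x <= 1 -> `|p.[x]| <= poly_l1 p.
Proof.
move=> /andP[x0 x1]; rewrite horner_coef /poly_l1.
apply: le_trans (ler_norm_sum _ _ _) _; apply: ler_sum => i _.
rewrite normrM normrX; apply: ler_piMr => //.
by apply: exprn_ile1; rewrite ?normr_ge0 // ger0_norm.
Qed.

Lemma supabs_ub (rho : R) (p : {poly R}) (x : R) : rho <= 1 -> 0 <= x <= rho ->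
  `|p.[x]| <= supabs rho p.
Proof.
move=> r1 hx; have r0 : 0 <= rho by case/andP: hx => h1 h2; exact: le_trans h2.
apply: sup_upper_bound; last by exists x.
split; first by exists `|p.[0]|, 0 => //; rewrite /= lexx r0.
exists (poly_l1 p) => _ [y /andP[y0 yr] <-]; apply: horner_l1.
by rewrite y0 (le_trans yr).
Qed.

Lemma poly_widen k (p : {poly R}) : (size p <= k.+1)%N -> p = \poly_(i < k.+1) p`_i.
Proof.
move=> hp; apply/polyP => j; rewrite coef_poly; case: ltnP => // h.
by rewrite nth_default // (leq_trans hp h).
Qed.

Lemma horner_mx_sum m (G : 'M[R]_m.+1) k (p : {poly R}) : (size p <= k.+1)%N ->
  horner_mx G p = \sum_(i < k.+1) p`_i *: G ^+ i.
Proof.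
move=> hp; rewrite {1}(poly_widen hp) poly_def rmorph_sum /=; apply: eq_bigr => i _.
by rewrite horner_mxZ rmorphXn /= horner_mx_X.
Qed.

Lemma horner1_sum k (p : {poly R}) : (size p <= k.+1)%N -> p.[1] = \sum_(i < k.+1) p`_i.
Proof.
move=> hp; rewrite {1}(poly_widen hp) poly_def horner_sum; apply: eq_bigr => i _.
by rewrite hornerZ hornerXn expr1n mulr1.
Qed.

Lemma poly_l1_sum k (p : {poly R}) : (size p <= k.+1)%N ->
  poly_l1 p = \sum_(i < k.+1) `|p`_i|.
Proof.
move=> hp; rewrite /poly_l1 (big_ord_widen _ (fun i => `|p`_i|) hp) big_mkcond.
apply: eq_bigr => i _; case: ifP => // h.
by rewrite nth_default ?normr0 // leqNgt h.
Qed.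

Lemma wsum_bound n k (f : 'I_k.+1 -> 'cV[R]_n) (c : 'cV[R]_k.+1) (B : R) :
  (forall i, enorm (f i) <= B) ->
  enorm (\sum_(i < k.+1) c i 0 *: f i) <= l1norm c * B.
Proof.
move=> hf; apply: le_trans (enorm_sum _ _ _) _.
rewrite /l1norm mulr_suml; apply: ler_sum => i _.
by rewrite enormZ; apply: ler_wpM2l.
Qed.

End PolyHelpers.

Lemma vec_id1 (R : realType) n (a b g Ga Gb Gg xa xb : 'cV[R]_n) :
  a = Gb + xb -> Ga + xa - a - Gg = (Ga - Gb - Gg) + (xa - xb).
Proof. by move=> ->; apply/matrixP => r s; rewrite !mxE; ring. Qed.

Lemma vec_id2 (R : realType) n (a b c d e : 'cV[R]_n) :
  b + c - a = - (a - b - d) + (c - e) - (d - e).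
Proof. by apply/matrixP => r s; rewrite !mxE; ring. Qed.

Unset Implicit Arguments.

Theorem corollary1 (R : realType) (n : nat) (rho alpha : R)
  (F xi : 'cV[R]_n -> 'cV[R]_n) (G : 'M[R]_n)
  (C : R) (k : nat) (x0 : 'cV[R]_n) (eps : R) (ct : 'cV[R]_k.+1)
  (pstar : {poly R}) :
  (1 <= n)%N -> 0 < rho < 1 -> 0 <= alpha ->
  lipschitz rho F ->
  (forall x, F x = G *m x + xi x) ->
  G^T = G ->
  (forall v : 'cV[R]_n, 0 <= (v^T *m G *m v) 0 0) ->
  (forall v : 'cV[R]_n, (v^T *m G *m v) 0 0 <= rho * (v^T *m v) 0 0) ->
  lipschitz alpha xi ->
  1 <= C -> (1 <= k)%N -> 0 < eps ->
  \sum_(i < k.+1) ct i 0 = 1 ->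
  l1norm ct <= C ->
  (forall c : 'cV[R]_k.+1, \sum_(i < k.+1) c i 0 = 1 -> l1norm c <= C ->
     enorm (resid F x0 ct) <= enorm (resid F x0 c) + eps * enorm (F x0 - x0)) ->
  feasible_poly k C pstar ->
  (forall q : {poly R}, feasible_poly k C q -> supabs rho pstar <= supabs rho q) ->
  let xe := \sum_(i < k.+1) ct i 0 *: iter i F x0 in
  enorm (F xe - xe) <=
    (supabs rho pstar + 3 * C * alpha * k%:R + eps) * enorm (F x0 - x0).
Proof.
revert F xi G x0; case: n => [|n] F xi G x0; first by move=> H; discriminate H.
move=> _ /andP[rho0 rho1] alpha0 FL Fdef GT Gpos Gle xiL C1 k1 eps0 ctsum ctl1 ctopt.
move=> [psize [pone pl1]] _; cbv zeta.
set xe := \sum_(i < k.+1) ct i 0 *: iter i F x0.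
set N := enorm (F x0 - x0).
have N0 : 0 <= N := enorm_ge0 _.
pose x i := iter i F x0.
pose d i := x i.+1 - x i.
have xS i : x i.+1 = F (x i) by [].
have d0 : d 0%N = F x0 - x0 by [].
have dN i : enorm (d i) <= N.
  elim: i => [|i IH]; first by rewrite d0.
  apply: le_trans (FL _ _) _; apply: le_trans (ler_wpM2l (ltW rho0) IH) _.
  by rewrite ler_piMl // ltW.
have dx j : enorm (x j - x 0%N) <= j%:R * N.
  elim: j => [|j IH]; first by rewrite subrr enorm0 mul0r.
  have -> : x j.+1 - x 0%N = d j + (x j - x 0%N) by rewrite /d addrA subrK.
  apply: le_trans (enormD _ _) _; rewrite -nat1r mulrDl mul1r; exact: lerD.
have Gn v : enorm (G *m v) <= enorm v.
  rewrite -[G in G *m v]horner_mx_X -[enorm v]mul1r.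
  apply: (horner_enorm _ GT Gpos Gle) => // y /andP[y0 yr].
  by rewrite hornerX ger0_norm // ltW // (le_lt_trans yr).
have eb i : enorm (d i - G ^+ i *m d 0%N) <= i%:R * alpha * N.
  elim: i => [|i IH]; first by rewrite expr0 mul1mx subrr enorm0 !mul0r.
  have -> : d i.+1 - G ^+ i.+1 *m d 0%N =
      G *m (d i - G ^+ i *m d 0%N) + (xi (x i.+1) - xi (x i)).
    rewrite /d (xS i.+1) (Fdef (x i.+1)) exprS -mulmxA !mulmxBr.
    exact: vec_id1 (Fdef (x i)).
  apply: le_trans (enormD _ _) _; rewrite -nat1r !mulrDl !mul1r [X in _ <= X]addrC.
  apply: lerD; first exact: le_trans (Gn _) IH.
  by apply: le_trans (xiL _ _) _; apply: ler_wpM2l => //; exact: (dN i).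
pose c := \col_(i < k.+1) pstar`_i.
have csum : \sum_(i < k.+1) c i 0 = 1.
  by rewrite -pone (horner1_sum psize); apply: eq_bigr => i _; rewrite mxE.
have cl1 : l1norm c <= C.
  have -> : l1norm c = poly_l1 pstar.
    by rewrite (poly_l1_sum psize); apply: eq_bigr => i _; rewrite mxE.
  exact: pl1.
have hopt := ctopt c csum cl1.
have residE c' : resid F x0 c' = - \sum_(i < k.+1) c' i 0 *: d i.
  by rewrite /resid -sumrN; apply: eq_bigr => i _; rewrite -scalerN opprB.
have Sge0 : 0 <= supabs rho pstar.
  apply: le_trans (normr_ge0 pstar.[0]) (supabs_ub pstar (ltW rho1) _).
  by rewrite lexx ltW.
have hpG : enorm (horner_mx G pstar *m d 0%N) <= supabs rho pstar * N.
  apply: (horner_enorm _ GT Gpos Gle Sge0) => y hy; exact: supabs_ub (ltW rho1) hy.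
have hc : \sum_(i < k.+1) c i 0 *: d i = horner_mx G pstar *m d 0%N
    + \sum_(i < k.+1) c i 0 *: (d i - G ^+ i *m d 0%N).
  rewrite (horner_mx_sum _ psize) mulmx_suml -big_split; apply: eq_bigr => i _ /=.
  by rewrite mxE -scalemxAl -scalerDr subrKC.
have kN i : (i < k.+1)%N -> i%:R * alpha * N <= k%:R * alpha * N.
  by move=> hi; rewrite -!mulrA ler_wpM2r ?mulr_ge0 // ler_nat -ltnS.
have rc : enorm (resid F x0 c) <= supabs rho pstar * N + C * (k%:R * alpha * N).
  rewrite residE enormN hc; apply: le_trans (enormD _ _) _; apply: lerD => //.
  apply: le_trans (wsum_bound c (B := k%:R * alpha * N) _) _.
    by move=> i; exact: le_trans (eb i) (kN i (ltn_ord i)).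
  by apply: ler_wpM2r => //; rewrite !mulr_ge0.
have r1 : resid F x0 ct = xe - G *m xe - \sum_(i < k.+1) ct i 0 *: xi (x i).
  rewrite /resid /xe mulmx_sumr -!sumrB; apply: eq_bigr => i _.
  by rewrite [iter i.+1 F x0]/= Fdef -scalemxAr scalerBr scalerDr opprD addrA.
have r2 : \sum_(i < k.+1) ct i 0 *: (xi (x i) - xi x0) =
    \sum_(i < k.+1) ct i 0 *: xi (x i) - xi x0.
  rewrite (eq_bigr (fun i => ct i 0 *: xi (x i) - ct i 0 *: xi x0)) => [|i _].
    by rewrite sumrB -scaler_suml ctsum scale1r.
  by rewrite scalerBr.
have hxe : F xe - xe = - resid F x0 ct + (xi xe - xi x0)
    - \sum_(i < k.+1) ct i 0 *: (xi (x i) - xi x0).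
  by rewrite r1 r2 Fdef; apply: vec_id2.
have hx i : (i < k.+1)%N -> enorm (x i - x 0%N) <= k%:R * N.
  by move=> hi; apply: le_trans (dx i) _; rewrite ler_wpM2r // ler_nat -ltnS.
have xe0 : xe - x0 = \sum_(i < k.+1) ct i 0 *: (x i - x 0%N).
  rewrite (eq_bigr (fun i => ct i 0 *: x i - ct i 0 *: x 0%N)) => [|i _].
    by rewrite sumrB -scaler_suml ctsum scale1r.
  by rewrite scalerBr.
have b1 : enorm (xi xe - xi x0) <= alpha * (C * (k%:R * N)).
  apply: le_trans (xiL _ _) _; apply: ler_wpM2l => //; rewrite xe0.
  apply: le_trans (wsum_bound ct (B := k%:R * N) _) _.
    by move=> i; exact: hx i (ltn_ord i).
  by apply: ler_wpM2r => //; exact: mulr_ge0.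
have b2 : enorm (\sum_(i < k.+1) ct i 0 *: (xi (x i) - xi x0)) <=
    C * (alpha * (k%:R * N)).
  apply: le_trans (wsum_bound ct (B := alpha * (k%:R * N)) _) _.
    move=> i; apply: le_trans (xiL _ _) _; apply: ler_wpM2l => //.
    exact: hx i (ltn_ord i).
  by apply: ler_wpM2r => //; rewrite !mulr_ge0.
rewrite hxe; apply: le_trans (enormD _ _) _; rewrite enormN.
have h := enormD (- resid F x0 ct) (xi xe - xi x0); rewrite enormN in h.
rewrite -/N in hopt.
move: (enorm (- resid F x0 ct + (xi xe - xi x0))) h => A h.
move: (enorm (\sum_(i < k.+1) ct i 0 *: (xi (x i) - xi x0))) b2 => B b2.
move: (enorm (resid F x0 c)) rc hopt => Rc rc hopt.
move: (enorm (resid F x0 ct)) hopt h => Rt hopt h.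
move: (enorm (xi xe - xi x0)) b1 h => E b1 h.
set S := supabs rho pstar in rc *; set K := k%:R in rc b1 b2 *.
lra.
Qed.
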